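(* Let $X$ be a Minkowski space and let $A=\{\mathbf{x}_1,\dots,\mathbf{x}_{2k}\}\subset X$ be a $d$-collinear set of even size, listed in its natural order. Then \[\mathrm{FT}(A)=\bigcap_{i=1}^k[\mathbf{x}_i\mathbf{x}_{2k-i+1}]_d=[\mathbf{x}_k\mathbf{x}_{k+1}]_d.\]
   Context: A Minkowski space is a finite-dimensional real normed space $(X,\|\cdot\|)$. A metric line is a subset of $X$ isometric to $\mathbb{R}$; a set is $d$-collinear if it is contained in a metric line. A finite $d$-collinear set $\{\mathbf{x}_1,\dots,\mathbf{x}_m\}$ is listed in its natural order if there is an isometry $f$ from it onto a subset of $\mathbb{R}$ with $f(\mathbf{x}_1)<f(\mathbf{x}_2)<\dots<f(\mathbf{x}_m)$. The $d$-segment is $[\mathbf{x}\mathbf{y}]_d=\{\mathbf{z}: \|\mathbf{x}-\mathbf{z}\|+\|\mathbf{z}-\mathbf{y}\|=\|\mathbf{x}-\mathbf{y}\|\}$. $\mathrm{FT}(A)$ is the set of minimizers of $\mathbf{x}\mapsto\sum_{\mathbf{a}\in A}\|\mathbf{x}-\mathbf{a}\|$. *)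

(* Defs.v *)
(* R : realType, the Minkowski space is 'rV[R]_n with an
   arbitrary norm N (every finite-dimensional real normed space is of this form). *)
From HB Require Import structures.
From mathcomp Require Import all_boot all_order all_algebra.
From mathcomp Require Import reals.
Set Implicit Arguments. Unset Strict Implicit. Unset Printing Implicit Defensive.
Import Order.TTheory GRing.Theory Num.Theory.
Local Open Scope ring_scope.

Section Minkowski.
Variables (R : realType) (n : nat).
Notation X := 'rV[R]_n.

Definition is_norm (N : X -> R) : Prop :=
  [/\ forall x, N x = 0 -> x = 0,
      forall (a : R) x, N (a *: x) = `|a| * N x &
      forall x y, N (x + y) <= N x + N y].

Definition isometry_line (N : X -> R) (f : R -> X) : Prop :=
  forall s t : R, N (f s - f t) = `|s - t|.

Definition d_collinear (N : X -> R) (m : nat) (x : nat -> X) : Prop :=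
  exists f : R -> X, isometry_line N f /\
    forall i, (i < m)%N -> exists t : R, f t = x i.

Definition natural_order (N : X -> R) (m : nat) (x : nat -> X) : Prop :=
  exists g : X -> R,
    (forall i j, (i < m)%N -> (j < m)%N -> `|g (x i) - g (x j)| = N (x i - x j)) /\
    (forall i j, (i < j)%N -> (j < m)%N -> g (x i) < g (x j)).

Definition dseg (N : X -> R) (a b : X) : X -> Prop :=
  fun z => N (a - z) + N (z - b) = N (a - b).

Definition FT (N : X -> R) (m : nat) (x : nat -> X) : X -> Prop :=
  fun z => forall y : X,
    \sum_(i < m) N (z - x i) <= \sum_(i < m) N (y - x i).

End Minkowski.

(* Main.v *)
Require Import Defs.
From HB Require Import structures.
From mathcomp Require Import all_boot all_order all_algebra.
From mathcomp Require Import reals.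
From mathcomp Require Import zify ring lra.
Import Order.TTheory GRing.Theory Num.Theory.
Local Open Scope ring_scope.

Lemma nrmN (R : realType) (n : nat) (N : 'rV[R]_n -> R) (v : 'rV[R]_n) :
  is_norm N -> N (- v) = N v.
Proof. by case=> _ hZ _; rewrite -scaleN1r hZ normrN normr1 mul1r. Qed.

Lemma nrmB (R : realType) (n : nat) (N : 'rV[R]_n -> R) (a b : 'rV[R]_n) :
  is_norm N -> N (a - b) = N (b - a).
Proof. by move=> hN; rewrite -(nrmN _ _ _ _ hN) opprB. Qed.

Lemma nrmT (R : realType) (n : nat) (N : 'rV[R]_n -> R) (a b c : 'rV[R]_n) :
  is_norm N -> N (a - c) <= N (a - b) + N (b - c).
Proof.
case=> _ _ hT; have -> : a - c = (a - b) + (b - c) by rewrite addrA subrK.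
exact: hT.
Qed.

Lemma sum_pair (R : realType) (k : nat) (F : nat -> R) :
  \sum_(i < 2 * k) F i = \sum_(j < k) (F j + F (2 * k - 1 - j)%N).
Proof.
rewrite -(big_mkord (fun _ => true) F) (big_cat_nat (n := k)) /=; last 2 first.
- by [].
- lia.
rewrite -{2}(add0n k) big_addn (_ : (2 * k - k = k)%N); last lia.
rewrite [X in _ + X]big_nat_rev /= -big_split /= big_mkord; apply: eq_bigr => i _.
congr (_ + F _); have := ltn_ord i; lia.
Qed.

Theorem corollary3p19 (R : realType) (n : nat) (N : 'rV[R]_n -> R)
  (k : nat) (x : nat -> 'rV[R]_n) :
  is_norm N -> (0 < k)%N ->
  d_collinear N (2 * k) x -> natural_order N (2 * k) x ->
  (forall z, FT N (2 * k) x z <->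
     (forall j, (j < k)%N -> dseg N (x j) (x (2 * k - 1 - j)%N) z)) /\
  (forall z, (forall j, (j < k)%N -> dseg N (x j) (x (2 * k - 1 - j)%N) z) <->
     dseg N (x k.-1) (x k) z).
Proof.
move=> hN k0 _ [g [hg hmono]].
have dist : forall i j, (i <= j)%N -> (j < 2 * k)%N ->
    N (x i - x j) = g (x j) - g (x i).
  move=> i j ij j2; have le : g (x i) <= g (x j).
    case: (ltngtP i j) ij => // [lt|->] _; last by [].
    exact/ltW/hmono.
  rewrite -hg //; last by apply: leq_ltn_trans j2.
  by rewrite distrC ger0_norm // subr_ge0.
pose c j := N (x j - x (2 * k - 1 - j)%N).
pose t y j := N (x j - y) + N (y - x (2 * k - 1 - j)%N).
have lb : forall y j, c j <= t y j by move=> y j; exact: nrmT _ _ _ _ _ _ hN.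
have S : forall y, \sum_(i < 2 * k) N (y - x i) = \sum_(j < k) t y j.
  move=> y; rewrite (sum_pair _ k (fun i => N (y - x i))).
  by apply: eq_bigr => j _; rewrite /t (nrmB _ _ _ _ _ hN).
have mid : forall j, (j < k)%N -> dseg N (x j) (x (2 * k - 1 - j)%N) (x k.-1).
  move=> j jk; rewrite /dseg !dist; try lia.
  lra.
have part2 : forall z, (forall j, (j < k)%N -> dseg N (x j) (x (2 * k - 1 - j)%N) z) <->
     dseg N (x k.-1) (x k) z.
  move=> z; split.
    move=> h; have := h k.-1 ltac:(lia).
    by rewrite (_ : (2 * k - 1 - k.-1 = k)%N) //; lia.
  move=> hs j jk; rewrite /dseg.
  have h1 := nrmT _ _ _ (x j) (x k.-1) z hN.
  have h2 := nrmT _ _ _ z (x k) (x (2 * k - 1 - j)%N) hN.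
  have h3 := lb z j; rewrite /c /t in h3.
  move: hs; rewrite /dseg !dist; try lia.
  move: h1 h2 h3; rewrite !dist; try lia.
  move=> h1 h2 h3 hs; lra.
split=> // z; split.
- move=> hFT j jk.
  have hle := hFT (x k.-1); rewrite !S in hle.
  have eqc : \sum_(j < k) t (x k.-1) j = \sum_(j < k) c j.
    by apply: eq_bigr => i _; apply: mid.
  rewrite eqc in hle.
  have hz : \sum_(i < k) (t z i - c i) = 0.
    apply/eqP; rewrite eq_le; apply/andP; split.
      by rewrite sumrB subr_le0.
    by apply: sumr_ge0 => i _; rewrite subr_ge0.
  have hpos : forall i : 'I_k, true -> 0 <= t z i - c i.
    by move=> i _; rewrite subr_ge0.
  have := @psumr_eq0P _ _ _ (fun i : 'I_k => t z i - c i) hpos hz (Ordinal jk) isT.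
  move=> /eqP; rewrite subr_eq0 => /eqP.
  by rewrite /t /c /dseg /=.
- move=> h y; rewrite !S.
  have -> : \sum_(j < k) t z j = \sum_(j < k) c j.
    by apply: eq_bigr => i _; apply: h.
  by apply: ler_sum => i _.
Qed.
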